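(* Let $R\in\mathcal C_{K_0}$ and write $R=X^\dagger QX$ with $Q,X\in\mathcal A'_G$, $Q\ge0$, $\operatorname{Rng}(X)=\operatorname{Supp}(Q)$. Then an operator $T$ on $\mathcal K\otimes\mathcal H$ is a perturbation of $R$ in $\mathcal C_{K_0}$ if and only if $T$ is a Hermitian element of $\mathcal A'_G$ with $\operatorname{Tr}_{\mathcal K}[T]=0$ and $T=X^\dagger OX$ for some nonzero Hermitian $O\in\mathcal A'_G$ with $\operatorname{Supp}(O)\subseteq\operatorname{Rng}(X)$. Writing $Q=\bigoplus_k(I_{\mathcal H_k}\otimes Q_k)$ and $X=\bigoplus_k(I_{\mathcal H_k}\otimes X_k)$, such $O$ has the form $O=\bigoplus_k(I_{\mathcal H_k}\otimes O_k)$ with $\operatorname{Supp}(O_k)\subseteq\operatorname{Rng}(X_k)$ for all $k$.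
   Context: Let $\mathcal H,\mathcal K$ be finite-dimensional Hilbert spaces and $g\mapsto U_g$, $g\mapsto V_g$ unitary representations of a group $G$ on $\mathcal H$ and $\mathcal K$. $U_g^*$ is the complex conjugate in a fixed orthonormal basis. Decompose $\mathcal K\otimes\mathcal H=\bigoplus_k(\mathcal H_k\otimes\mathbb C^{m_k})$ according to the equivalence classes $k$ of irreducible components of $V_g\otimes U_g^*$ (irreducible space $\mathcal H_k$, multiplicity $m_k$). The commutant $\mathcal A'_G$ of $\{V_g\otimes U_g^*\}$ consists of the operators $\bigoplus_k(I_{\mathcal H_k}\otimes M_k)$, $M_k\in\mathcal B(\mathbb C^{m_k})$. CP maps (quantum operations) $\mathcal M$ covariant in the sense $\mathcal M^*(U_g\rho U_g^\dagger)=V_g\mathcal M^*(\rho)V_g^\dagger$ correspond bijectively to operators $R\ge0$ in $\mathcal A'_G$ via $R=(\mathcal M^*\otimes\mathcal I)(|I\rangle\langle I|)$, $|I\rangle=\sum_n|n\rangle\otimes|n\rangle$. Fix an operator $K_0$ on $\mathcal H$ with $0\le K_0\le I_{\mathcal H}$ and let $\mathcal C_{K_0}=\{R\in\mathcal A'_G: R\ge0,\ \operatorname{Tr}_{\mathcal K}[R]=K_0\}$, a convex set. A nonzero $T$ is a perturbation of $R\in\mathcal C_{K_0}$ if $R\pm tT\in\mathcal C_{K_0}$ for some $t>0$; $R$ is extremal iff it has no perturbation. $\operatorname{Supp}(O)=\operatorname{Ker}(O)^\perp$, $\operatorname{Rng}$ denotes range. *)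

(* Defs.v *)
From HB Require Import structures.
From mathcomp Require Import all_boot all_order all_algebra.
From mathcomp Require mxtens.
Set Implicit Arguments. Unset Strict Implicit. Unset Printing Implicit Defensive.
Import Order.TTheory GRing.Theory Num.Theory.
Local Open Scope ring_scope.

(* Finite-dimensional Hilbert spaces C^n over a numeric algebraically closed
   field C (e.g. the complex numbers); operators are square matrices acting on
   column vectors 'cV_n.  Tensor product K (x) H is C^(M*N) with the Kronecker
   product mxtens.tensmx (first factor = K). *)

Section Defs.
Variable C : numClosedFieldType.

Definition adjmx m n (A : 'M[C]_(m, n)) : 'M[C]_(n, m) := (map_mx Num.conj A)^T.

Definition is_herm n (A : 'M[C]_n) : Prop := adjmx A = A.

Definition psd n (A : 'M[C]_n) : Prop :=
  forall v : 'cV[C]_n, 0 <= (adjmx v *m A *m v) 0 0.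

(* Rng(X) and Supp(O) = Ker(O)^perp, as predicates on vectors *)
Definition in_rng n (X : 'M[C]_n) (v : 'cV[C]_n) : Prop := exists u, v = X *m u.
Definition in_supp n (O : 'M[C]_n) (v : 'cV[C]_n) : Prop :=
  forall w : 'cV[C]_n, O *m w = 0 -> adjmx w *m v = 0.

Definition supp_sub_rng n (O X : 'M[C]_n) : Prop :=
  forall v, in_supp O v -> in_rng X v.

Definition is_group (G : Type) (gmul : G -> G -> G) (gone : G) (ginv : G -> G) :=
  [/\ forall a b c, gmul a (gmul b c) = gmul (gmul a b) c,
      forall a, gmul gone a = a &
      forall a, gmul (ginv a) a = gone].

Definition unitary_rep (G : Type) (gmul : G -> G -> G) (gone : G) n
  (U : G -> 'M[C]_n) : Prop :=
  [/\ forall g h, U (gmul g h) = U g *m U h,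
      U gone = 1%:M &
      forall g, U g *m adjmx (U g) = 1%:M /\ adjmx (U g) *m U g = 1%:M].

(* irreducibility: no nontrivial invariant subspace (column space of S) *)
Definition irreducible_rep (G : Type) n (P : G -> 'M[C]_n) : Prop :=
  (0 < n)%N /\
  forall S : 'M[C]_n, (forall g, exists A : 'M[C]_n, P g *m S = S *m A) ->
    S = 0 \/ \rank S = n.

Definition equiv_rep (G : Type) n1 n2 (P1 : G -> 'M[C]_n1) (P2 : G -> 'M[C]_n2) : Prop :=
  exists T : 'M[C]_(n1, n2), [/\ n1 = n2, \rank T = n1 &
     forall g, P1 g *m T = T *m P2 g].

Definition VUc (G : Type) M N (U : G -> 'M[C]_N) (V : G -> 'M[C]_M) (g : G)
  : 'M[C]_(M * N) := mxtens.tensmx (V g) (map_mx Num.conj (U g)).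

Definition in_commutant (G : Type) M N (U : G -> 'M[C]_N) (V : G -> 'M[C]_M)
  (T : 'M[C]_(M * N)) : Prop :=
  forall g, T *m VUc U V g = VUc U V g *m T.

Definition ptraceK M N (T : 'M[C]_(M * N)) : 'M[C]_N :=
  \matrix_(i, j) \sum_(a < M) T (mxtens.mxtens_index (a, i)) (mxtens.mxtens_index (a, j)).

Definition in_CK0 (G : Type) M N (U : G -> 'M[C]_N) (V : G -> 'M[C]_M)
  (K0 : 'M[C]_N) (R : 'M[C]_(M * N)) : Prop :=
  [/\ in_commutant U V R, psd R & ptraceK R = K0].

Definition perturbation (G : Type) M N (U : G -> 'M[C]_N) (V : G -> 'M[C]_M)
  (K0 : 'M[C]_N) (R T : 'M[C]_(M * N)) : Prop :=
  T <> 0 /\ exists t : C, [/\ 0 < t, in_CK0 U V K0 (R + t *: T)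
                                   & in_CK0 U V K0 (R - t *: T)].

(* block-diagonal operator  W^dagger (oplus_k I_{H_k} (x) M_k) W, where the
   unitary W : K(x)H -> oplus_k H_k (x) C^{m_k} implements the isotypic
   decomposition; d k = dim H_k, mm k = m_k *)
Definition blockop M N p (d mm : 'I_p -> nat)
  (W : 'M[C]_(\sum_(k < p) (d k * mm k), M * N))
  (Ms : forall k : 'I_p, 'M[C]_(mm k)) : 'M[C]_(M * N) :=
  adjmx W *m \mxdiag_(k < p) (mxtens.tensmx (1%:M : 'M[C]_(d k)) (Ms k)) *m W.

End Defs.

(* Main.v *)
Require Import Defs.
From HB Require Import structures.
From mathcomp Require Import all_boot all_order all_algebra.
From mathcomp Require mxtens.
From mathcomp Require Import ring.
From mathcomp Require Import spectral.
Import Order.TTheory GRing.Theory Num.Theory.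
Local Open Scope ring_scope.

Set Implicit Arguments. Unset Strict Implicit. Unset Printing Implicit Defensive.

Section Adj.
Variable C : numClosedFieldType.
Implicit Types (a : C).

Lemma adjM m n q (A : 'M[C]_(m, n)) (B : 'M[C]_(n, q)) :
  adjmx (A *m B) = adjmx B *m adjmx A.
Proof. by rewrite /adjmx map_mxM trmx_mul. Qed.

Lemma adjK m n (A : 'M[C]_(m, n)) : adjmx (adjmx A) = A.
Proof. by apply/matrixP => i j; rewrite !mxE conjCK. Qed.

Lemma adjD m n (A B : 'M[C]_(m, n)) : adjmx (A + B) = adjmx A + adjmx B.
Proof. by apply/matrixP => i j; rewrite !mxE rmorphD. Qed.

Lemma adjN m n (A : 'M[C]_(m, n)) : adjmx (- A) = - adjmx A.
Proof. by apply/matrixP => i j; rewrite !mxE rmorphN. Qed.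

Lemma adjB m n (A B : 'M[C]_(m, n)) : adjmx (A - B) = adjmx A - adjmx B.
Proof. by rewrite adjD adjN. Qed.

Lemma adjZ m n a (A : 'M[C]_(m, n)) : adjmx (a *: A) = a^* *: adjmx A.
Proof. by apply/matrixP => i j; rewrite !mxE rmorphM. Qed.

Lemma adj0 m n : adjmx (0 : 'M[C]_(m, n)) = 0.
Proof. by apply/matrixP => i j; rewrite !mxE rmorph0. Qed.

Lemma adj1 n : adjmx (1%:M : 'M[C]_n) = 1%:M.
Proof. by apply/matrixP => i j; rewrite !mxE eq_sym; case: eqP; rewrite /= ?rmorph1 ?rmorph0. Qed.

Lemma adj_entry m n (A : 'M[C]_(m, n)) i j : adjmx A i j = (A j i)^*.
Proof. by rewrite !mxE. Qed.

Lemma adj_tens m n p q (A : 'M[C]_(m, n)) (B : 'M[C]_(p, q)) :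
  adjmx (mxtens.tensmx A B) = mxtens.tensmx (adjmx A) (adjmx B).
Proof. by apply/matrixP => i j; rewrite !mxE rmorphM. Qed.

Lemma tens11 m n : mxtens.tensmx (1%:M : 'M[C]_m) (1%:M : 'M[C]_n) = 1%:M.
Proof.
apply/matrixP => i j.
case: (mxtens.mxtens_indexP i) => i0 i1; case: (mxtens.mxtens_indexP j) => j0 j1.
rewrite mxtens.tensmxE !mxE -natrM mulnb; congr (_ %:R).
by rewrite (inj_eq (can_inj (@mxtens.mxtens_indexK _ _))) xpair_eqE.
Qed.

(* positivity of A^* A *)
Lemma adj_self_eq0 m n (A : 'M[C]_(m, n)) : adjmx A *m A = 0 -> A = 0.
Proof.
move=> h; apply/matrixP => i j.
have := congr1 (fun B : 'M[C]_n => B j j) h; rewrite !mxE => /eqP.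
rewrite psumr_eq0; last by move=> k _; rewrite !mxE mulrC mul_conjC_ge0.
move=> /allP /(_ i) ; rewrite mem_index_enum => /(_ isT) /implyP /(_ isT).
by rewrite !mxE mulrC mul_conjC_eq0 => /eqP ->.
Qed.

End Adj.


Section Psd.
Variable C : numClosedFieldType.

Definition form n (u : 'cV[C]_n) (A : 'M[C]_n) (w : 'cV[C]_n) : C :=
  (adjmx u *m A *m w) 0 0.

Lemma formDl n (u u' w : 'cV[C]_n) A : form (u + u') A w = form u A w + form u' A w.
Proof. by rewrite /form adjD !mulmxDl mxE. Qed.
Lemma formDr n (u w w' : 'cV[C]_n) A : form u A (w + w') = form u A w + form u A w'.
Proof. by rewrite /form mulmxDr mxE. Qed.
Lemma formZl n a (u w : 'cV[C]_n) A : form (a *: u) A w = a^* * form u A w.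
Proof. by rewrite /form adjZ -!scalemxAl mxE. Qed.
Lemma formZr n a (u w : 'cV[C]_n) A : form u A (a *: w) = a * form u A w.
Proof. by rewrite /form -scalemxAr mxE. Qed.
Lemma formBm n (u w : 'cV[C]_n) A B : form u (A - B) w = form u A w - form u B w.
Proof. by rewrite /form mulmxBr mulmxBl !mxE. Qed.
Lemma form_adj n (u w : 'cV[C]_n) A : form u (adjmx A) w = (form w A u)^*.
Proof.
by rewrite /form -adj_entry !adjM adjK mulmxA.
Qed.
Lemma form_delta n (B : 'M[C]_n) i j : form (delta_mx i 0) B (delta_mx j 0) = B i j.
Proof.
rewrite /form.
have -> : adjmx (delta_mx i 0 : 'cV[C]_n) = delta_mx 0 i.
  apply/matrixP => a b; rewrite !mxE.
  by case: (b == i); case: (a == 0); rewrite /= ?rmorph1 ?rmorph0.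
by rewrite -rowE -colE !mxE.
Qed.

Lemma form0_mx n (B : 'M[C]_n) : (forall u w, form u B w = 0) -> B = 0.
Proof. by move=> h; apply/matrixP => i j; rewrite -form_delta h mxE. Qed.

Lemma psd_herm n (A : 'M[C]_n) : psd A -> is_herm A.
Proof.
move=> hA; rewrite /is_herm; apply/eqP; rewrite eq_sym -subr_eq0; apply/eqP.
set B := A - adjmx A.
have g0 : forall v, form v B v = 0.
  move=> v; rewrite /B formBm form_adj.
  have /ger0_real/conj_Creal -> : 0 <= form v A v by exact: hA.
  by rewrite subrr.
apply: form0_mx => u w.
have e1 := g0 (u + w); rewrite formDl !formDr !g0 add0r addr0 in e1.
have e2 := g0 (u + 'i *: w); rewrite formDl !formDr !formZl !formZr !g0 in e2.
rewrite !mulr0 add0r addr0 conjCi in e2.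
have e3 : form w B u = - form u B w by apply/eqP; rewrite -addr_eq0 addrC e1.
rewrite e3 mulrNN -mulr2n -mulrnAr in e2.
move/eqP: e2; rewrite mulf_eq0 (negbTE (neq0Ci C)) /= mulrn_eq0 /=.
by move/eqP.
Qed.

End Psd.


Section Psd2.
Variable C : numClosedFieldType.

Lemma mx11_eq0 (A : 'M[C]_1) : A 0 0 = 0 -> A = 0.
Proof. by move=> h; apply/matrixP => i j; rewrite [i]ord1 [j]ord1 h mxE. Qed.

Lemma vec_eq0 n (y : 'cV[C]_n) : (adjmx y *m y) 0 0 = 0 -> y = 0.
Proof. by move=> h; apply: adj_self_eq0; apply: mx11_eq0. Qed.

Lemma vec_ge0 n (y : 'cV[C]_n) : 0 <= (adjmx y *m y) 0 0.
Proof.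
rewrite !mxE; apply: sumr_ge0 => i _; rewrite !mxE mulrC mul_conjC_ge0 //.
Qed.

Lemma psd_kernel n (P : 'M[C]_n) (w : 'cV[C]_n) :
  psd P -> form w P w = 0 -> P *m w = 0.
Proof.
move=> hP h0; have hh := psd_herm hP.
set y := P *m w.
set nn := (adjmx y *m y) 0 0.
set c := form y P y.
have hn : 0 <= nn := vec_ge0 y.
have hc : 0 <= c := hP y.
have hc1 : 0 < c + 1 by rewrite ltr_wpDl // ltr01.
set s := nn / (c + 1).
have hs : 0 <= s by rewrite divr_ge0 // ltW.
have sreal : s^* = s by apply/conj_Creal/ger0_real.
have e1 : form w P y = nn.
  by rewrite /form /nn /y -{1}hh -adjM.
have e2 : form y P w = nn by rewrite /form /nn /y mulmxA.
have := hP (w + (- s) *: y).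
rewrite -/(form _ _ _) formDl !formDr !formZl !formZr h0 e1 e2 -/c.
have sN : (- s)^* = - s.
  by rewrite raddfN; congr (- _); exact: sreal. 
rewrite sN => hge.
have key : (0 + - s * nn + (- s * nn + - s * (- s * c))) = - (nn ^+ 2 * (c + 2)) / (c + 1) ^+ 2.
  rewrite /s; field; by rewrite lt0r_neq0.
rewrite key in hge.
have hpos : 0 <= nn ^+ 2 * (c + 2) / (c + 1) ^+ 2.
  apply: divr_ge0; last by apply: exprn_ge0; apply: ltW.
  by apply: mulr_ge0; [apply: exprn_ge0 | apply: addr_ge0].
have : nn ^+ 2 * (c + 2) / (c + 1) ^+ 2 = 0.
  by apply/le_anti; rewrite hpos andbT -oppr_ge0 -mulNr.
move/eqP; rewrite !mulf_eq0 invr_eq0 !expf_eq0 /=.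
have -> : (c + 1 == 0) = false by apply/negbTE; rewrite lt0r_neq0.
have -> : (c + 2 == 0) = false.
  by apply/negbTE; rewrite lt0r_neq0 // ltr_wpDl // ltr0n.
rewrite !orbF orbb => /eqP hn0.
by apply: vec_eq0.
Qed.

End Psd2.


Section Ginv.
Variable C : numClosedFieldType.

Lemma kerSq n m (A : 'M[C]_n) (B : 'M[C]_(n, m)) :
  is_herm A -> A *m (A *m B) = 0 -> A *m B = 0.
Proof.
move=> hA h; apply: adj_self_eq0.
by rewrite adjM hA -mulmxA h mulmx0.
Qed.

Lemma ginv_poly n (A : 'M[C]_n.+1) : is_herm A ->
  exists p : {poly C}, A *m horner_mx A p *m A = A.
Proof.
move=> hA.
have CH := Cayley_Hamilton A.
have chi0 : char_poly A != 0 by apply: monic_neq0; apply: char_poly_monic.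
case: (multiplicity_XsubC (char_poly A) 0) => e [r].
rewrite chi0 /= => nr0 hchi.
rewrite hchi polyC0 subr0 rmorphM rmorphXn /= horner_mx_X in CH.
set Br := horner_mx A r in CH.
have cAB : GRing.comm A Br by rewrite /GRing.comm -!mulmxE; exact: comm_mx_horner.
have hAB : A ^+ e * Br = 0.
  by rewrite -(commrX e (commr_sym cAB)); exact: CH.
have hA1 : A * Br = 0.
  case: e hAB {CH hchi} => [|e]; first by rewrite expr0 mul1r => ->; rewrite mulr0.
  elim: e => [|e IH]; first by rewrite expr1.
  move=> h; apply: IH.
  have := @kerSq _ _ A (A ^+ e * Br) hA; rewrite !mulmxE => H.
  rewrite exprS -mulrA; apply: H.
  by rewrite mulrA -expr2 mulrA -exprD add2n.
have rr : root (r - (r.[0])%:P) 0 by rewrite /root !hornerE subrr.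
case/factor_theorem: rr => s hs.
rewrite polyC0 subr0 in hs.
have rE : r = r.[0]%:P + s * 'X by rewrite -hs addrC subrK.
have r0 : r.[0] != 0 by exact: nr0.
exists ((- (r.[0])^-1) *: s).
have : A * (r.[0]%:M + horner_mx A s * A) = 0.
  suff <- : Br = r.[0]%:M + horner_mx A s * A by [].
  by rewrite /Br {1}rE rmorphD rmorphM /= horner_mx_C horner_mx_X.
rewrite mulrDr => h.
have h' : r.[0] *: A + A *m horner_mx A s *m A = 0.
  by rewrite -mul_mx_scalar -mulmxA !mulmxE.
have h2 : A *m horner_mx A s *m A = - (r.[0] *: A).
  by apply/eqP; rewrite -addr_eq0 addrC h'.
rewrite linearZ /= -scalemxAr -scalemxAl h2 scalerN scalerA mulNr mulVf //.
by rewrite scaleN1r opprK.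
Qed.


Lemma ginv_mx n (A : 'M[C]_n) : is_herm A -> exists H : 'M[C]_n,
  [/\ A *m H *m A = A, A *m H = H *m A &
      forall Z, A *m Z = Z *m A -> H *m Z = Z *m H].
Proof.
case: n A => [|n] A hA.
  by exists 0; split => [|//|Z _]; apply/matrixP => -[].
have [p hp] := ginv_poly hA.
exists (horner_mx A p); split => //.
  by symmetry; apply: comm_horner_mx.
by move=> Z hZ; apply: comm_horner_mx.
Qed.

End Ginv.


Section Supp.
Variable C : numClosedFieldType.

Lemma supp_in_rng n (O : 'M[C]_n) (v : 'cV[C]_n) :
  is_herm O -> in_supp O v -> exists u, v = O *m u.
Proof.
move=> hO hv; have [H [h1 h2 _]] := ginv_mx hO.
set w := v - O *m H *m v.
have hw : O *m w = 0.
  rewrite /w mulmxBr !mulmxA -[O *m O *m H]mulmxA h2 mulmxA h1.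
  by rewrite subrr.
have e1 := hv w hw.
have e2 : adjmx w *m (O *m H *m v) = 0.
  by rewrite !mulmxA -{1}hO -adjM hw adj0 !mul0mx.
have : adjmx w *m w = 0 by rewrite {2}/w mulmxBr e1 e2 subrr.
move/adj_self_eq0 => /eqP; rewrite /w subr_eq0 => /eqP ->.
by exists (H *m v); rewrite mulmxA.
Qed.

Lemma herm_img_supp n (O : 'M[C]_n) (z : 'cV[C]_n) :
  is_herm O -> in_supp O (O *m z).
Proof.
by move=> hO w hw; rewrite mulmxA -{1}hO -adjM hw adj0 mul0mx.
Qed.

End Supp.


Section Comm.
Variable C : numClosedFieldType.
Variables (G : Type) (M N : nat) (U : G -> 'M[C]_N) (V : G -> 'M[C]_M).

Lemma commD (A B : 'M[C]_(M * N)) : in_commutant U V A -> in_commutant U V B ->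
  in_commutant U V (A + B).
Proof. by move=> hA hB g; rewrite mulmxDl mulmxDr hA hB. Qed.

Lemma commN (A : 'M[C]_(M * N)) : in_commutant U V A -> in_commutant U V (- A).
Proof. by move=> hA g; rewrite mulNmx mulmxN hA. Qed.

Lemma commB (A B : 'M[C]_(M * N)) : in_commutant U V A -> in_commutant U V B ->
  in_commutant U V (A - B).
Proof. by move=> hA hB; apply: commD => //; apply: commN. Qed.

Lemma commZ a (A : 'M[C]_(M * N)) : in_commutant U V A -> in_commutant U V (a *: A).
Proof. by move=> hA g; rewrite -scalemxAl -scalemxAr hA. Qed.

Lemma commM (A B : 'M[C]_(M * N)) : in_commutant U V A -> in_commutant U V B ->
  in_commutant U V (A *m B).
Proof. by move=> hA hB g; rewrite -mulmxA hB mulmxA hA mulmxA. Qed.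

Lemma commZinv a (A : 'M[C]_(M * N)) : a != 0 -> in_commutant U V (a *: A) ->
  in_commutant U V A.
Proof.
by move=> ha h; rewrite -[A](scale1r) -(mulVf ha) -scalerA; apply: commZ.
Qed.

Lemma adj_conj m n (A : 'M[C]_(m, n)) :
  adjmx (map_mx Num.conj A) = map_mx Num.conj (adjmx A).
Proof. by apply/matrixP => i j; rewrite !mxE. Qed.

Lemma unit_conj n (A : 'M[C]_n) : A *m adjmx A = 1%:M ->
  map_mx Num.conj A *m adjmx (map_mx Num.conj A) = 1%:M.
Proof. by move=> h; rewrite adj_conj -map_mxM h map_mx1. Qed.

Hypothesis hU : forall g, U g *m adjmx (U g) = 1%:M /\ adjmx (U g) *m U g = 1%:M.
Hypothesis hV : forall g, V g *m adjmx (V g) = 1%:M /\ adjmx (V g) *m V g = 1%:M.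

Lemma VUc_unit g : VUc U V g *m adjmx (VUc U V g) = 1%:M /\
                   adjmx (VUc U V g) *m VUc U V g = 1%:M.
Proof.
rewrite /VUc adj_tens !mxtens.tensmx_mul; split.
  by rewrite (hV g).1 unit_conj ?(hU g).1 // tens11.
rewrite (hV g).2 adj_conj -map_mxM (hU g).2 map_mx1 tens11 //.
Qed.

Lemma commA (T : 'M[C]_(M * N)) : in_commutant U V T -> in_commutant U V (adjmx T).
Proof.
move=> hT g; have [u1 u2] := VUc_unit g.
have e : adjmx (VUc U V g) *m adjmx T = adjmx T *m adjmx (VUc U V g).
  by rewrite -!adjM hT.
rewrite -[LHS]mul1mx -u1 -!mulmxA [adjmx _ *m (adjmx T *m _)]mulmxA e.
by rewrite !mulmxA -mulmxA u2 mulmx1.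
Qed.

End Comm.


Section DiagPert.
Variable C : numClosedFieldType.

Lemma formDm n (u w : 'cV[C]_n) A B : form u (A + B) w = form u A w + form u B w.
Proof. by rewrite /form mulmxDr mulmxDl !mxE. Qed.
Lemma formZm n a (u w : 'cV[C]_n) A : form u (a *: A) w = a * form u A w.
Proof. by rewrite /form -scalemxAr -scalemxAl mxE. Qed.

Lemma form_expand n (z : 'cV[C]_n) (A : 'M[C]_n) :
  form z A z = \sum_j \sum_i ((z i 0)^* * A i j * z j 0).
Proof.
rewrite /form mxE; apply: eq_bigr => j _; rewrite mxE mulr_suml.
by apply: eq_bigr => i _; rewrite !mxE.
Qed.

Lemma form_diag n (z : 'cV[C]_n) (d : 'rV[C]_n) :
  form z (diag_mx d) z = \sum_i (d 0 i * ((z i 0)^* * z i 0)).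
Proof.
rewrite form_expand; apply: eq_bigr => j _.
rewrite (bigD1 j) //= big1 ?addr0; first by rewrite !mxE eqxx mulr1n mulrAC mulrC.
by move=> i /negbTE nij; rewrite !mxE nij mulr0n mulr0 mul0r.
Qed.

Lemma term_le (I : finType) (F : I -> C) i :
  (forall j, 0 <= F j) -> F i <= \sum_j F j.
Proof.
move=> h; rewrite (bigD1 i) //= lerDl; apply: sumr_ge0 => j _; exact: h.
Qed.

Lemma diag_pert n (d : 'rV[C]_n) (O : 'M[C]_n) :
  (forall i, 0 <= d 0 i) -> is_herm O ->
  (forall i j, O i j != 0 -> d 0 i != 0 /\ d 0 j != 0) ->
  exists t, 0 < t /\ forall z : 'cV[C]_n,
    0 <= form z (diag_mx d + t *: O) z /\ 0 <= form z (diag_mx d - t *: O) z.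
Proof.
move=> hd hO hsupp.
set h := \sum_i (d 0 i)^-1.
set s : C := \sum_j \sum_i `|O i j|.
have h0 : 0 <= h by apply: sumr_ge0 => i _; rewrite invr_ge0.
have s0 : 0 <= s by do 2! (apply: sumr_ge0 => ? _).
have pos : 0 < s * h + 1 by rewrite ltr_wpDl ?mulr_ge0 ?ltr01.
exists (s * h + 1)^-1; split; first by rewrite invr_gt0.
set t := (s * h + 1)^-1.
move=> z.
set a := fun i => (z i 0)^* * z i 0.
have a0 : forall i, 0 <= a i by move=> i; rewrite /a mulrC mul_conjC_ge0.
set S := \sum_i d 0 i * a i.
set NN := \sum_i (d 0 i != 0)%:R * a i.
have NN0 : forall i, 0 <= (d 0 i != 0)%:R * a i.
  by move=> i; rewrite mulr_ge0 ?ler0n.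
have S0 : 0 <= S by apply: sumr_ge0 => i _; rewrite mulr_ge0.
have hNS : NN <= h * S.
  rewrite /S mulr_sumr; apply: ler_sum => i _.
  have [di0|din0] := eqVneq (d 0 i) 0; first by rewrite di0 /= !mul0r mulr0.
  rewrite /= mul1r mulrA -{1}(mul1r (a i)); apply: ler_wpM2r => //.
  have dpos : 0 < d 0 i by rewrite lt0r din0 hd.
  rewrite -(mulVf din0) ler_pM2r //.
  by apply: (term_le (F := fun i => (d 0 i)^-1)) => // j; rewrite invr_ge0.
set c := form z O z.
have creal : c \is Num.real.
  by rewrite CrealE /c -form_adj hO.
have hc : `|c| <= s * NN.
  rewrite /c form_expand; apply: le_trans (ler_norm_sum _ _ _) _.
  rewrite /s mulr_suml; apply: ler_sum => j _.
  apply: le_trans (ler_norm_sum _ _ _) _.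
  rewrite mulr_suml; apply: ler_sum => i _.
  rewrite !normrM norm_conjC.
  have [Oz|Onz] := eqVneq (O i j) 0; first by rewrite Oz normr0 mulr0 !mul0r.
  have [di dj] := hsupp i j Onz.
  have aN : forall k, d 0 k != 0 -> `|z k 0| * `|z k 0| <= NN.
    move=> k dk; rewrite -expr2 normCKC.
    have := term_le (F := fun i => (d 0 i != 0)%:R * a i) k NN0.
    by rewrite dk mul1r.
  have xy : `|z i 0| * `|z j 0| <= NN.
    case/orP: (real_leVge (normr_real (z i 0)) (normr_real (z j 0))) => hle.
      by apply: le_trans (aN j dj); apply: ler_wpM2r.
    by apply: le_trans (aN i di); apply: ler_wpM2l.
  by rewrite mulrAC mulrC; apply: ler_wpM2l.
have key : 0 <= S - t * (s * NN).
  rewrite -(pmulr_rge0 _ pos).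
  have -> : (s * h + 1) * (S - t * (s * NN)) = (s * h + 1) * S - s * NN.
    by rewrite mulrBr mulrA mulfV ?mul1r // lt0r_neq0.
  apply: le_trans S0 _.
  rewrite mulrDl mul1r lerBrDr addrC lerD2r -mulrA; exact: ler_wpM2l.
have t0 : 0 <= t by rewrite invr_ge0 ltW.
have tc : t * `|c| <= t * (s * NN) by apply: ler_wpM2l.
have Sd : form z (diag_mx d) z = S by rewrite form_diag.
split.
  rewrite formDm formZm Sd; apply: le_trans key _.
  rewrite lerD2l lerNl; apply: le_trans tc.
  rewrite -mulrN; apply: ler_wpM2l => //.
  by rewrite -normrN; apply: real_ler_norm; rewrite rpredN.
rewrite formBm formZm Sd; apply: le_trans key _.
rewrite lerD2l lerN2; apply: le_trans tc.
by apply: ler_wpM2l => //; apply: real_ler_norm.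
Qed.
End DiagPert.


Section PertPsd.
Variable C : numClosedFieldType.

Lemma tstar m n (A : 'M[C]_(m, n)) : map_mx Num.conj (A ^T) = adjmx A.
Proof. by rewrite /adjmx map_trmx. Qed.

Lemma conj_form n (P A : 'M[C]_n) (x y : 'cV[C]_n) :
  form (adjmx P *m x) A (adjmx P *m y) = form x (P *m A *m adjmx P) y.
Proof. by rewrite /form adjM adjK !mulmxA. Qed.

Lemma pert_psd n (Q O : 'M[C]_n) : psd Q -> is_herm O ->
  (forall w : 'cV[C]_n, Q *m w = 0 -> O *m w = 0) ->
  exists t, 0 < t /\ psd (Q + t *: O) /\ psd (Q - t *: O).
Proof.
move=> hQ hO hker; have hQh := psd_herm hQ.
have nQ : Q \is normalmx by apply/normalmxP; rewrite tstar hQh.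
have hQe := orthomx_spectralP nQ.
set P := spectralmx Q in hQe; set d := spectral_diag Q in hQe.
have Pun : P \is unitarymx by exact: spectral_unitarymx.
have Pu : P *m adjmx P = 1%:M by rewrite -tstar; apply/unitarymxP.
have iP : invmx P = adjmx P by rewrite invmx_unitary // tstar.
have Pu2 : adjmx P *m P = 1%:M by rewrite -iP mulVmx // spectral_unit.
rewrite iP in hQe.
have PQP : P *m Q *m adjmx P = diag_mx d.
  by rewrite hQe !mulmxA Pu mul1mx -mulmxA Pu mulmx1.
have hd : forall i, 0 <= d 0 i.
  move=> i; have := hQ (adjmx P *m (delta_mx i 0 : 'cV[C]_n)).
  by rewrite -/(form _ _ _) conj_form PQP form_delta mxE eqxx mulr1n.
set O' := P *m O *m adjmx P.
have hO' : is_herm O' by rewrite /is_herm /O' !adjM adjK hO mulmxA.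
have col0 : forall i j, d 0 j = 0 -> O' i j = 0.
  move=> i j dj.
  have hD : diag_mx d *m (delta_mx j 0 : 'cV[C]_n) = 0.
    rewrite -colE; apply/matrixP => k l; rewrite !mxE.
    by case: eqP => [->|]; rewrite ?dj ?mulr0n.
  have hQ0 : Q *m (adjmx P *m (delta_mx j 0 : 'cV[C]_n)) = 0.
    by rewrite hQe -!mulmxA [P *m (adjmx P *m _)]mulmxA Pu mul1mx hD mulmx0.
  have := hker _ hQ0.
  move=> hO0; have : O' *m (delta_mx j 0 : 'cV[C]_n) = 0 by rewrite /O' -!mulmxA hO0 mulmx0.
  rewrite -colE => h; have := congr1 (fun M : 'cV[C]_n => M i 0) h.
  by rewrite !mxE.
have hsupp : forall i j, O' i j != 0 -> d 0 i != 0 /\ d 0 j != 0.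
  move=> i j hij; split; apply/eqP => hz; move: hij; last by rewrite col0 ?eqxx.
  have -> : O' i j = (O' j i)^* by rewrite -{1}hO' !mxE.
  by rewrite col0 // rmorph0 eqxx.
have [t [t0 ht]] := diag_pert hd hO' hsupp.
exists t; split => //.
have red : forall (B : 'M[C]_n) (u : 'cV[C]_n),
    form u (Q + B) u = form (P *m u) (diag_mx d + P *m B *m adjmx P) (P *m u).
  move=> B u; have e : u = adjmx P *m (P *m u) by rewrite mulmxA Pu2 mul1mx.
  rewrite {1 2}e conj_form.
  by rewrite mulmxDr mulmxDl PQP.
split => u; rewrite -/(form _ _ _).
  by rewrite red -scalemxAr -scalemxAl; exact: (ht _).1.
rewrite -scaleNr red -scalemxAr -scalemxAl scaleNr; exact: (ht _).2.
Qed.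

End PertPsd.


Section Blk.
Variable C : numClosedFieldType.

Lemma blk_id dk m (hk : (0 < dk)%N) (Mk : 'M[C]_m) :
  mxtens.tensmx (1%:M : 'M[C]_dk) Mk *m (pid_mx m : 'M[C]_(dk * m, m))
  = pid_mx m *m Mk.
Proof.
apply/matrixP => i j; case: (mxtens.mxtens_indexP i) => a b.
have jlt : (0 * m + j < dk * m)%N by rewrite mul0n add0n (leq_trans (ltn_ord j)) // leq_pmull.
set s0 := mxtens.mxtens_index (Ordinal hk, j).
have vs0 : val s0 = val j by rewrite /= mul0n add0n.
rewrite !mxE (bigD1 s0) //= big1 ?addr0; last first.
  move=> s hs; rewrite !mxE.
  have -> : (s == j :> nat) = false.
    apply/negbTE; apply: contra hs => /eqP e; apply/eqP/val_inj.
    by rewrite vs0; exact: e.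
  by rewrite /= mulr0.
rewrite [pid_mx m s0 j]mxE vs0 eqxx ltn_ord mulr1 /s0 mxtens.tensmxE mxE.
have vi : val (mxtens.mxtens_index (a, b)) = (a * m + b)%N by [].
have [ea|na] := eqVneq a (Ordinal hk).
  rewrite ea mul1r (bigD1 b) //= big1 ?addr0.
    by rewrite mxE /= mul0n add0n eqxx ltn_ord mul1r.
  move=> k hkb; rewrite mxE /= mul0n add0n.
  by rewrite (_ : (b == k :> nat) = false) ?mul0r //; apply/negbTE; rewrite eq_sym.
rewrite mul0r big1 // => k _; rewrite mxE.
have : (m <= a * m + b)%N.
  have a1 : (1 <= a)%N by rewrite lt0n; apply: contra na => /eqP e; apply/eqP/val_inj.
  by apply: leq_trans (leq_addr _ _); rewrite -{1}(mul1n m) leq_mul2r a1 orbT.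
move=> hle; rewrite vi (_ : (a * m + b < m)%N = false) ?andbF ?mul0r //.
by rewrite ltnNge hle.
Qed.

End Blk.

Section Blocks.
Variable C : numClosedFieldType.
Variables (p : nat) (d mm : 'I_p -> nat).

Definition Eb (k l : 'I_p) : 'M[C]_(d l * mm l, mm k) :=
  (l == k)%:R *: pid_mx (mm k).
Definition Ek (k : 'I_p) : 'M[C]_(\sum_(l < p) (d l * mm l), mm k) :=
  \mxcol_l Eb k l.

Lemma adj_mxcol n (B : forall l : 'I_p, 'M[C]_(d l * mm l, n)) :
  adjmx (\mxcol_l B l) = \mxrow_l adjmx (B l).
Proof. by apply/matrixP => i j; rewrite !mxE. Qed.

Lemma diagE (Ms : forall k : 'I_p, 'M[C]_(mm k)) k (hk : (0 < d k)%N) :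
  \mxdiag_(l < p) (mxtens.tensmx (1%:M : 'M[C]_(d l)) (Ms l)) *m Ek k = Ek k *m Ms k.
Proof.
rewrite /Ek mul_mxdiag_mxcol mxcol_mul; apply: eq_mxcol => l.
rewrite /Eb; case: (eqVneq l k) => [->|nlk].
  by rewrite scale1r blk_id.
by rewrite scale0r mulmx0 mul0mx.
Qed.

Lemma FE k (hk : (0 < d k)%N) : adjmx (Ek k) *m Ek k = 1%:M.
Proof.
rewrite /Ek adj_mxcol mul_mxrow_mxcol (bigD1 k) //= big1 ?addr0.
  rewrite /Eb eqxx scale1r.
  have -> : adjmx (pid_mx (mm k) : 'M[C]_(d k * mm k, mm k)) = pid_mx (mm k).
    by rewrite /adjmx map_pid_mx tr_pid_mx.
  rewrite mul_pid_mx minnn (minn_idPr _) ?pid_mx_1 //.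
  by rewrite leq_pmull.
move=> l nlk; rewrite /Eb (negbTE nlk) scale0r adj0 mul0mx //.
Qed.

Lemma Fdiag (Ms : forall k : 'I_p, 'M[C]_(mm k)) k (hk : (0 < d k)%N) :
  adjmx (Ek k) *m \mxdiag_(l < p) (mxtens.tensmx (1%:M : 'M[C]_(d l)) (Ms l))
  = Ms k *m adjmx (Ek k).
Proof.
rewrite /Ek adj_mxcol mul_mxrow_mxdiag mul_mxrow; apply: eq_mxrow => l.
rewrite /Eb; case: (eqVneq l k) => [->|nlk]; last first.
  by rewrite scale0r adj0 mul0mx mulmx0.
rewrite scale1r.
have := blk_id hk (adjmx (Ms k)).
move=> /(congr1 (@adjmx _ _ _)); rewrite !adjM adjK adj_tens adj1 => e.
by rewrite adjK in e.
Qed.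


End Blocks.


Section Part2.
Variable C : numClosedFieldType.
Variables (p : nat) (d mm : 'I_p -> nat) (M N : nat).
Variable W : 'M[C]_(\sum_(k < p) (d k * mm k), M * N).
Hypothesis hW1 : W *m adjmx W = 1%:M.
Hypothesis hd : forall k, (0 < d k)%N.

Lemma Wblock (Ms : forall k : 'I_p, 'M[C]_(mm k)) :
  W *m blockop W Ms = \mxdiag_(l < p) (mxtens.tensmx (1%:M : 'M[C]_(d l)) (Ms l)) *m W.
Proof. by rewrite /blockop !mulmxA hW1 mul1mx. Qed.

Lemma part2 (O X : 'M[C]_(M * N)) (Os Xs : forall k : 'I_p, 'M[C]_(mm k)) :
  O = blockop W Os -> X = blockop W Xs -> supp_sub_rng O X ->
  forall k, supp_sub_rng (Os k) (Xs k).
Proof.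
move=> hO hX hsub k v hv.
set vt := adjmx W *m ((@Ek C p d mm k) *m v).
have hvt : in_supp O vt.
  move=> w hw.
  have h1 : \mxdiag_(l < p) (mxtens.tensmx (1%:M : 'M[C]_(d l)) (Os l)) *m (W *m w) = 0.
    by rewrite mulmxA -Wblock -hO -mulmxA hw mulmx0.
  set y := adjmx ((@Ek C p d mm k)) *m (W *m w).
  have hy : Os k *m y = 0.
    by rewrite /y mulmxA -Fdiag // -mulmxA h1 mulmx0.
  have := hv y hy.
  by rewrite /y /vt adjM adjK !mulmxA adjM.
have [u hu] := hsub _ hvt.
exists (adjmx ((@Ek C p d mm k)) *m (W *m u)).
have e1 : W *m vt = (@Ek C p d mm k) *m v by rewrite /vt mulmxA hW1 mul1mx.
have : adjmx ((@Ek C p d mm k)) *m (W *m vt) = v by rewrite e1 mulmxA FE // mul1mx.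
move=> <-; rewrite hu hX [W *m (_ *m u)]mulmxA Wblock -mulmxA [adjmx _ *m (_ *m _)]mulmxA Fdiag // -mulmxA //.
Qed.

End Part2.


Section Main.
Variable C : numClosedFieldType.

Lemma ptraceD M N (A B : 'M[C]_(M * N)) : ptraceK (A + B) = ptraceK A + ptraceK B.
Proof.
by apply/matrixP => i j; rewrite !mxE -big_split; apply: eq_bigr => a _; rewrite !mxE.
Qed.

Lemma ptraceZ M N a (A : 'M[C]_(M * N)) : ptraceK (a *: A) = a *: ptraceK A.
Proof.
by apply/matrixP => i j; rewrite !mxE mulr_sumr; apply: eq_bigr => b _; rewrite !mxE.
Qed.

Lemma ptraceN M N (A : 'M[C]_(M * N)) : ptraceK (- A) = - ptraceK A.
Proof. by rewrite -scaleN1r ptraceZ scaleN1r. Qed.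

Lemma mx_col0 n m (A : 'M[C]_(n, m)) : (forall z : 'cV[C]_m, A *m z = 0) -> A = 0.
Proof.
move=> h; apply/matrixP => i j.
by have := congr1 (fun Z : 'cV[C]_n => Z i 0) (h (delta_mx j 0)); rewrite -colE !mxE.
Qed.

Lemma ker_mx n m (X T : 'M[C]_n) :
  (forall w : 'cV[C]_n, X *m w = 0 -> T *m w = 0) ->
  forall B : 'M[C]_(n, m), X *m B = 0 -> T *m B = 0.
Proof.
move=> h B hB; apply/matrixP => i j.
have hc : X *m col j B = 0 by rewrite colE mulmxA hB mul0mx.
have := congr1 (fun Z : 'cV[C]_n => Z i 0) (h _ hc).
by rewrite colE mulmxA -colE !mxE.
Qed.

Lemma form_conj n (X B : 'M[C]_n) v : form v (adjmx X *m B *m X) v = form (X *m v) B (X *m v).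
Proof. by rewrite /form adjM !mulmxA. Qed.

End Main.

Unset Implicit Arguments. Set Strict Implicit. Set Printing Implicit Defensive.

Theorem theorem4
  (C : numClosedFieldType)
  (* the group G and unitary representations U on H = C^N, V on K = C^M *)
  (G : Type) (gmul : G -> G -> G) (gone : G) (ginv : G -> G)
  (hG : is_group gmul gone ginv)
  (M N : nat) (U : G -> 'M[C]_N) (V : G -> 'M[C]_M)
  (hU : unitary_rep gmul gone U) (hV : unitary_rep gmul gone V)
  (* isotypic decomposition K(x)H = oplus_k H_k (x) C^{m_k} of V_g (x) U_g^* *)
  (p : nat) (d mm : 'I_p -> nat)
  (W : 'M[C]_(\sum_(k < p) (d k * mm k), M * N))
  (pi : forall k : 'I_p, G -> 'M[C]_(d k))
  (hW : W *m adjmx W = 1%:M /\ adjmx W *m W = 1%:M)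
  (hpi_rep : forall k, unitary_rep gmul gone (pi k))
  (hpi_irr : forall k, irreducible_rep (pi k))
  (hpi_ineq : forall k l, k != l -> ~ equiv_rep (pi k) (pi l))
  (hmm : forall k, (0 < mm k)%N)
  (hdecomp : forall g, W *m VUc U V g *m adjmx W =
      \mxdiag_(k < p) (mxtens.tensmx (pi k g) (1%:M : 'M[C]_(mm k))))
  (hcomm : forall T : 'M[C]_(M * N),
      in_commutant U V T <-> exists Ms, T = blockop W Ms)
  (* the data of the theorem *)
  (K0 : 'M[C]_N) (hK0 : psd K0 /\ psd (1%:M - K0))
  (R Q X : 'M[C]_(M * N))
  (hR : in_CK0 U V K0 R)
  (hQ : in_commutant U V Q /\ psd Q)
  (hX : in_commutant U V X)
  (hRQX : R = adjmx X *m Q *m X)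
  (hrng : forall v, in_rng X v <-> in_supp Q v) :
  (forall T : 'M[C]_(M * N),
     perturbation U V K0 R T <->
     [/\ is_herm T, in_commutant U V T, ptraceK T = 0 &
         exists O : 'M[C]_(M * N),
           [/\ O <> 0, is_herm O, in_commutant U V O, supp_sub_rng O X
             & T = adjmx X *m O *m X]])
  /\
  (forall (O : 'M[C]_(M * N)) (Xs : forall k : 'I_p, 'M[C]_(mm k)),
     O <> 0 -> is_herm O -> in_commutant U V O -> supp_sub_rng O X ->
     X = blockop W Xs ->
     exists Os : forall k : 'I_p, 'M[C]_(mm k),
       O = blockop W Os /\ forall k, supp_sub_rng (Os k) (Xs k)).
Proof.
have hUu : forall g, U g *m adjmx (U g) = 1%:M /\ adjmx (U g) *m U g = 1%:M.
  by case: hU.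
have hVu : forall g, V g *m adjmx (V g) = 1%:M /\ adjmx (V g) *m V g = 1%:M.
  by case: hV.
have cA := commA hUu hVu.
case: hR => hRc hRp hRt.
case: hQ => hQc hQp.
split; last first.
  move=> O Xs On0 hO cO sO hXs.
  have [Os hOs] := (hcomm O).1 cO.
  exists Os; split => //.
  apply: (part2 hW.1 _ hOs hXs sO) => k.
  by case: (hpi_irr k).
move=> T; split.
- move=> [Tn0 [t [t0 hP hM]]].
  case: hP => hPc hPp hPt; case: hM => hMc hMp hMt.
  have tn0 : t != 0 by rewrite lt0r_neq0.
  have treal : t^* = t by apply/conj_Creal/ger0_real/ltW.
  have cT : in_commutant U V T.
    apply: (commZinv tn0).
    have -> : t *: T = R + t *: T - R by rewrite addrAC subrr add0r.
    exact: commB.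
  have pT : ptraceK T = 0.
    have : t *: ptraceK T = 0.
      apply: (@addrI _ K0); rewrite addr0 -{1}hRt -ptraceZ -ptraceD; exact: hPt.
    by move/eqP; rewrite scaler_eq0 (negbTE tn0) => /eqP.
  have hT : is_herm T.
    have e1 := psd_herm hPp; have e2 := psd_herm hRp.
    rewrite /is_herm adjD adjZ e2 treal in e1.
    rewrite /is_herm; apply: (scalerI tn0); exact: (addrI _ e1).
  have hker : forall w : 'cV[C]_(M * N), X *m w = 0 -> T *m w = 0.
    move=> w hw.
    have Rw : R *m w = 0 by rewrite hRQX -mulmxA hw mulmx0.
    have fR : form w R w = 0 by rewrite /form -mulmxA Rw mulmx0 mxE.
    have h1 := hPp w; have h2 := hMp w.
    rewrite -/(form _ _ _) formDm formZm fR add0r in h1.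
    rewrite -/(form _ _ _) formBm formZm fR sub0r oppr_ge0 in h2.
    have f0 : t * form w T w = 0 by apply/le_anti; rewrite h1 h2.
    have : form w (R + t *: T) w = 0 by rewrite formDm formZm fR add0r.
    move/(psd_kernel hPp); rewrite mulmxDl Rw add0r -scalemxAl => /eqP.
    by rewrite scaler_eq0 (negbTE tn0) /= => /eqP.
  set A := adjmx X *m X.
  have hA : is_herm A by rewrite /is_herm /A adjM adjK.
  have [H [h1 h2 h3]] := ginv_mx hA.
  set Y := H *m adjmx X.
  have XHA : X *m (H *m A) = X.
    apply/eqP; rewrite -subr_eq0; apply/eqP; apply: adj_self_eq0.
    have -> : X *m (H *m A) - X = X *m (H *m A - 1%:M) by rewrite mulmxBr mulmx1.
    rewrite adjM -mulmxA [adjmx X *m _]mulmxA -/A mulmxBr mulmx1 [A *m (H *m A)]mulmxA h1.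
    by rewrite subrr mulmx0.
  have TYX : T *m (Y *m X) = T.
    have : X *m (1%:M - Y *m X) = 0.
      by rewrite mulmxBr mulmx1 /Y -mulmxA -/A XHA subrr.
    move/(ker_mx hker); rewrite mulmxBr mulmx1 => /eqP; rewrite subr_eq0 => /eqP.
    by move=> <-.
  have cAA : in_commutant U V A by apply: commM => //; apply: cA.
  have cH : in_commutant U V H by move=> g; apply: h3; apply: cAA.
  have cY : in_commutant U V Y by apply: commM => //; apply: cA.
  have e : adjmx (Y *m X) *m T = T by rewrite -{1}hT -adjM TYX hT.
  have eT' : T = adjmx X *m (adjmx Y *m T *m Y) *m X.
    have -> : adjmx X *m (adjmx Y *m T *m Y) *m X = adjmx (Y *m X) *m T *m (Y *m X).
      by rewrite adjM !mulmxA.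
    by rewrite -mulmxA TYX e.
  split => //.
  exists (adjmx Y *m T *m Y); split => //.
  + by move=> O0; apply: Tn0; rewrite eT' O0 mulmx0 mul0mx.
  + by rewrite /is_herm /Y !adjM !adjK hT !mulmxA.
  + by apply: commM => //; apply: commM => //; apply: cA.
  + move=> v hv.
    have hOh : is_herm (adjmx Y *m T *m Y) by rewrite /is_herm /Y !adjM !adjK hT !mulmxA.
    have [u ->] := supp_in_rng hOh hv.
    exists (adjmx H *m T *m Y *m u).
    by rewrite /Y adjM adjK !mulmxA.
- move=> [hT cT pT [O [On0 hO cO sO eT]]].
  have img : forall z : 'cV[C]_(M * N), in_rng X (O *m z).
    by move=> z; apply: sO; apply: herm_img_supp.
  have Tn0 : T <> 0.
    move=> T0; apply: On0.
    have OX : forall b : 'cV[C]_(M * N), O *m (X *m b) = 0.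
      move=> b; have [c hc] := img (X *m b).
      apply: adj_self_eq0; rewrite {2}hc adjM hO adjM !mulmxA.
      have : adjmx b *m T *m c = 0 by rewrite T0 mulmx0 mul0mx.
      by rewrite eT !mulmxA.
    apply: mx_col0 => z; have [u hu] := img z.
    apply: (kerSq hO); by rewrite hu OX.
  have hkerQO : forall w : 'cV[C]_(M * N), Q *m w = 0 -> O *m w = 0.
    move=> w hw; apply: adj_self_eq0.
    have hs : in_supp Q (O *m (O *m w)) by apply/hrng; apply: img.
    have := hs w hw; by rewrite adjM hO mulmxA.
  have [t [t0 [p1 p2]]] := pert_psd hQp hO hkerQO.
  have eP : R + t *: T = adjmx X *m (Q + t *: O) *m X.
    by rewrite hRQX eT mulmxDr mulmxDl -scalemxAr -scalemxAl.
  have eM : R - t *: T = adjmx X *m (Q - t *: O) *m X.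
    by rewrite hRQX eT mulmxBr mulmxBl -scalemxAr -scalemxAl.
  split => //; exists t; split => //; split.
  + by apply: commD => //; apply: commZ.
  + move=> v; have := form_conj X (Q + t *: O) v; rewrite /form -eP => ->; exact: p1.
  + by rewrite ptraceD ptraceZ pT scaler0 addr0.
  + by apply: commB => //; apply: commZ.
  + move=> v; have := form_conj X (Q - t *: O) v; rewrite /form -eM => ->; exact: p2.
  + by rewrite ptraceD ptraceN ptraceZ pT scaler0 oppr0 addr0.
Qed.
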